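(* Let $C_0$ be any quantum circuit with gates $G_1,\dots,G_m$, let $H_1,\dots,H_m$ be unitaries (each of the same dimension as the corresponding $G_i$) drawn independently from the Haar measure, and let $C(\theta)$, $\theta\in[0,1]$, be the circuit obtained from $C_0$ by replacing each gate $G_i$ with $H_i(\theta)G_i$, where $H_i(\theta)$ is the Cayley transform of $H_i$. Let $\mathcal N$ be any fixed noise model. Then $p_0(C(\theta),\mathcal N)$ is a rational function in $\theta$ whose numerator and denominator have degree $O(m)$.
   Context: Cayley transform: for a unitary $H=\sum_j e^{i\varphi_j}|\psi_j\rangle\langle\psi_j|$ with $\varphi_j\in[-\pi,\pi]$, $H(\theta)=(\theta I+(2-\theta)H)((2-\theta)I+\theta H)^{-1}=\sum_j\frac{1+i(1-\theta)\tan(\varphi_j/2)}{1-i(1-\theta)\tan(\varphi_j/2)}|\psi_j\rangle\langle\psi_j|$, so $H(0)=H$ and $H(1)=I$. A noise model $\mathcal N$ consists of $O(m)$ noise channels placed in the circuit, each acting on a constant number of qubits, of the form $(1-\gamma)\mathcal I+\gamma\mathcal E_k$ with $\mathcal E_k$ an arbitrary CPTP map, fixed independently of the gates. For an $n$-qubit circuit $C$, $p_0(C,\mathcal N)=\mathrm{Tr}[|0^n\rangle\langle 0^n|\,\mathcal C_{\mathcal N}(|0^n\rangle\langle 0^n|)]$, where $\mathcal C_{\mathcal N}$ is the channel obtained by applying the noise model to $C$. *)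

(* Defs.v *)
From HB Require Import structures.
From mathcomp Require Import all_boot all_order all_algebra.
From mathcomp Require Import complex.
Set Implicit Arguments. Unset Strict Implicit. Unset Printing Implicit Defensive.
Import Order.TTheory GRing.Theory Num.Theory.
Local Open Scope ring_scope.
Local Open Scope complex_scope.

Section QC.
Variable R : rcfType.
Local Notation C := R[i].

Definition adjmx d (A : 'M[C]_d) : 'M[C]_d := (map_mx (@conjc R) A)^T.

Definition unitary d (A : 'M[C]_d) : Prop := A *m adjmx A = 1%:M.

(* bit j of a basis index x : qubit j is the j-th binary digit *)
Definition bitof (x j : nat) : bool := odd (x %/ 2 ^ j).

(* entry of a d x d matrix at nat positions (0 out of range) *)
Definition mxe d (A : 'M[C]_d) (a b : nat) : C :=
  match @insub _ (fun x => x < d)%N (ordinal d) a,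
        @insub _ (fun x => x < d)%N (ordinal d) b with
  | Some i, Some j => A i j
  | _, _ => 0
  end.

(* index in the k-qubit space of the restriction of basis state x to qubits q *)
Definition restr_idx k n (q : 'I_k -> 'I_n) (x : nat) : nat :=
  (\sum_(l < k) bitof x (q l) * 2 ^ l)%N.

(* the operator U (acting on the k qubits q_0..q_{k-1}) tensored with the identity
   on the remaining qubits, as a 2^n x 2^n matrix *)
Definition embed k n (q : 'I_k -> 'I_n) (U : 'M[C]_(2 ^ k)) : 'M[C]_(2 ^ n) :=
  \matrix_(i, j)
    (if [forall l : 'I_n, [exists t : 'I_k, q t == l] || (bitof i l == bitof j l)]
     then mxe U (restr_idx q i) (restr_idx q j) else 0).

Definition cayley d (H : 'M[C]_d) (theta : R) : 'M[C]_d :=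
  (theta%:C *: 1%:M + (2 - theta)%:C *: H) *m invmx ((2 - theta)%:C *: 1%:M + theta%:C *: H).

(* a local noise channel: qubits it acts on and the Kraus operators of E_k *)
Record noise_chan n := NoiseChan {
  nk : nat;
  nq : 'I_nk -> 'I_n;
  nkraus : seq 'M[C]_(2 ^ nk) }.

(* E_k is CPTP (Kraus form, sum K^dag K = I), acts on <= K qubits, injective wiring *)
Definition valid_noise n (Kmax : nat) (ch : noise_chan n) : Prop :=
  [/\ (nk ch <= Kmax)%N, injective (@nq n ch) &
      \sum_(Kr <- nkraus ch) adjmx Kr *m Kr = 1%:M].

Definition apply_noise n (gamma : R) (ch : noise_chan n) (rho : 'M[C]_(2 ^ n)) :
    'M[C]_(2 ^ n) :=
  (1 - gamma)%:C *: rho +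
  gamma%:C *: \sum_(Kr <- nkraus ch)
                 (embed (@nq n ch) Kr *m rho *m adjmx (embed (@nq n ch) Kr)).

Definition apply_noises n (gamma : R) (s : seq (noise_chan n)) (rho : 'M[C]_(2 ^ n)) :=
  foldl (fun r ch => apply_noise gamma ch r) rho s.

Definition apply_unitary N (U : 'M[C]_N) (rho : 'M[C]_N) := U *m rho *m adjmx U.

Definition proj0 n : 'M[C]_(2 ^ n) :=
  \matrix_(i, j) (((i : nat) == 0%N) && ((j : nat) == 0%N))%:R.

(* noisy circuit: Nz ord0 applied first, then for i = 0..m-1 the gate
   (H_i(theta) G_i on qubits q i) followed by the noise channels Nz (i+1). *)
Definition noisy_circuit n m (k : 'I_m -> nat) (q : forall i, 'I_(k i) -> 'I_n)
    (G H : forall i, 'M[C]_(2 ^ k i)) (gamma : R)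
    (Nz : 'I_m.+1 -> seq (noise_chan n)) (theta : R) (rho : 'M[C]_(2 ^ n)) :
    'M[C]_(2 ^ n) :=
  foldl (fun r i => apply_noises gamma (Nz (lift ord0 i))
                      (apply_unitary (embed (q i) (cayley (H i) theta *m G i)) r))
        (apply_noises gamma (Nz ord0) rho) (enum 'I_m).

Definition p0 n m (k : 'I_m -> nat) (q : forall i, 'I_(k i) -> 'I_n)
    (G H : forall i, 'M[C]_(2 ^ k i)) (gamma : R)
    (Nz : 'I_m.+1 -> seq (noise_chan n)) (theta : R) : C :=
  \tr (proj0 n *m noisy_circuit q G H gamma Nz theta (proj0 n)).

End QC.

(* Main.v *)
Require Import Defs.
From HB Require Import structures.
From mathcomp Require Import all_boot all_order all_algebra.
From mathcomp Require Import complex.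
From mathcomp Require Import zify ring.
From mathcomp Require Import fingroup perm.
From Stdlib Require List.
Import Order.TTheory GRing.Theory Num.Theory.
Local Open Scope ring_scope.
Local Open Scope complex_scope.
Set Implicit Arguments. Unset Strict Implicit. Unset Printing Implicit Defensive.

Section S.
Variable R : rcfType.
Local Notation C := R[i].

Definition RatF (Q : {poly C}) (D : nat) (f : R -> C) :=
  exists P : {poly C}, (size P <= D.+1)%N /\
    forall t : R, 0 <= t <= 1 -> f t = P.[t%:C] / Q.[t%:C].

Lemma Rat_ext Q D (f g : R -> C) :
  (forall t : R, 0 <= t <= 1 -> f t = g t) -> RatF Q D f -> RatF Q D g.
Proof. by move=> e [P [sP eP]]; exists P; split=> // t ht; rewrite -e // eP. Qed.

Lemma Rat_le Q D D' f : (D <= D')%N -> RatF Q D f -> RatF Q D' f.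
Proof. by move=> le [P [sP eP]]; exists P; split=> //; apply: leq_trans sP _. Qed.

Lemma Rat0 Q D : RatF Q D (fun _ => 0).
Proof. by exists 0; split; [rewrite size_poly0 | move=> t _; rewrite horner0 mul0r]. Qed.

Lemma Rat_add Q D (f g : R -> C) : RatF Q D f -> RatF Q D g -> RatF Q D (fun t => f t + g t).
Proof.
move=> [P [sP eP]] [P' [sP' eP']]; exists (P + P'); split.
  by rewrite (leq_trans (size_polyD _ _)) // geq_max sP sP'.
by move=> t ht; rewrite eP // eP' // hornerD mulrDl.
Qed.

Lemma Rat_sum Q D (I : Type) (r : seq I) (P : pred I) (F : I -> R -> C) :
  (forall i, P i -> RatF Q D (F i)) -> RatF Q D (fun t => \sum_(i <- r | P i) F i t).
Proof.
move=> h; elim: r => [|a r IH].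
  apply: Rat_ext (Rat0 Q D) => t _. by rewrite big_nil.
case Pa: (P a).
  by apply: (Rat_ext _ (Rat_add (h a Pa) IH)) => t _; rewrite big_cons Pa.
by apply: (Rat_ext _ IH) => t _; rewrite big_cons Pa.
Qed.

Lemma Rat_mul Q1 Q2 D1 D2 (f g : R -> C) : RatF Q1 D1 f -> RatF Q2 D2 g ->
  RatF (Q1 * Q2) (D1 + D2) (fun t => f t * g t).
Proof.
move=> [P [sP eP]] [P' [sP' eP']]; exists (P * P'); split.
  by apply: leq_trans (size_polyMleq _ _) _; lia.
by move=> t ht; rewrite eP // eP' // !hornerM invfM mulrACA.
Qed.

Lemma Rat_mul1 D1 D2 (f g : R -> C) : RatF 1 D1 f -> RatF 1 D2 g ->
  RatF 1 (D1 + D2) (fun t => f t * g t).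
Proof. by move=> h1 h2; have := Rat_mul h1 h2; rewrite mulr1. Qed.

Lemma Rat_const (c : C) : RatF 1 0 (fun _ => c).
Proof.
exists c%:P; split; first exact: size_polyC_leq1.
by move=> t _; rewrite hornerC hornerE divr1.
Qed.

Lemma Rat_scal Q D (c : C) f : RatF Q D f -> RatF Q D (fun t => c * f t).
Proof.
move=> [P [sP eP]]; exists (c *: P); split.
  exact: leq_trans (size_scale_leq _ _) sP.
by move=> t ht; rewrite eP // hornerZ mulrA.
Qed.

Lemma Rat_lin (a b : C) : RatF 1 1 (fun t => a + b * t%:C).
Proof.
exists (a%:P + b *: 'X); split.
  rewrite (leq_trans (size_polyD _ _)) // geq_max.
  rewrite (leq_trans (size_polyC_leq1 _)) //=.
  by rewrite (leq_trans (size_scale_leq _ _)) // size_polyX.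
by move=> t _; rewrite !hornerE divr1.
Qed.

Lemma Rat_prod n D (F : 'I_n -> R -> C) : (forall i, RatF 1 D (F i)) ->
  RatF 1 (n * D) (fun t => \prod_(i < n) F i t).
Proof.
elim: n F => [|n IH] F h.
  by apply: (Rat_ext _ (Rat_le _ (Rat_const 1))) => // t _; rewrite big_ord0.
apply: (Rat_ext _ (Rat_le _ (Rat_mul1 (IH (fun i => F (widen_ord (leqnSn n) i)) (fun i => h _)) (h ord_max)))).
  by move=> t _; rewrite big_ord_recr.
by rewrite mulSn addnC.
Qed.

Lemma horner_conj (P : {poly C}) (t : R) :
  (map_poly conjc P).[t%:C] = conjc (P.[t%:C]).
Proof. by rewrite -{1}conjc_real horner_map. Qed.

Lemma Rat_conj Q D f : RatF Q D f -> RatF (map_poly conjc Q) D (fun t => conjc (f t)).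
Proof.
move=> [P [sP eP]]; exists (map_poly conjc P); split.
  by rewrite size_map_poly.
by move=> t ht; rewrite eP // !horner_conj rmorphM /= conjc_inv.
Qed.

End S.

Section S.
Variable R : rcfType.
Local Notation C := R[i].

Definition MRat N (Q : {poly C}) D (F : R -> 'M[C]_N) :=
  forall i j, RatF Q D (fun t => F t i j).

Lemma MRat_ext N Q D (F G : R -> 'M[C]_N) :
  (forall t : R, 0 <= t <= 1 -> F t = G t) -> MRat Q D F -> MRat Q D G.
Proof. by move=> e h i j; apply: Rat_ext _ (h i j) => t ht; rewrite e. Qed.

Lemma MRat_le N Q D D' (F : R -> 'M[C]_N) : (D <= D')%N -> MRat Q D F -> MRat Q D' F.
Proof. by move=> le h i j; apply: Rat_le le (h i j). Qed.

Lemma MRat_const N (M : 'M[C]_N) : MRat 1 0 (fun _ => M).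
Proof. by move=> i j; apply: Rat_const. Qed.

Lemma MRat_mul N Q1 Q2 D1 D2 (A B : R -> 'M[C]_N) : MRat Q1 D1 A -> MRat Q2 D2 B ->
  MRat (Q1 * Q2) (D1 + D2) (fun t => A t *m B t).
Proof.
move=> hA hB i j.
have := Rat_sum (F := fun l t => A t i l * B t l j) (P := predT) (index_enum 'I_N) (fun l _ => Rat_mul (hA i l) (hB l j)).
apply: Rat_ext.
by move=> t _; rewrite mxE.
Qed.

Lemma MRat_cl N Q D (K : 'M[C]_N) (B : R -> 'M[C]_N) : MRat Q D B ->
  MRat Q D (fun t => K *m B t).
Proof.
move=> hB i j.
apply: Rat_ext _ (Rat_sum (F := fun l t => K i l * B t l j) (P := predT) (index_enum _) (fun l _ => Rat_scal (K i l) (hB l j))).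
by move=> t _; rewrite mxE.
Qed.

Lemma MRat_cr N Q D (K : 'M[C]_N) (B : R -> 'M[C]_N) : MRat Q D B ->
  MRat Q D (fun t => B t *m K).
Proof.
move=> hB i j.
apply: Rat_ext _ (Rat_sum (F := fun l t => K l j * B t i l) (P := predT) (index_enum _) (fun l _ => Rat_scal (K l j) (hB i l))).
by move=> t _; rewrite mxE; apply: eq_bigr => l _; rewrite mulrC.
Qed.

Lemma MRat_add N Q D (A B : R -> 'M[C]_N) : MRat Q D A -> MRat Q D B ->
  MRat Q D (fun t => A t + B t).
Proof. by move=> hA hB i j; apply: Rat_ext _ (Rat_add (hA i j) (hB i j)) => t _; rewrite mxE. Qed.

Lemma MRat_scal N Q D (c : C) (A : R -> 'M[C]_N) : MRat Q D A ->
  MRat Q D (fun t => c *: A t).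
Proof. by move=> hA i j; apply: Rat_ext _ (Rat_scal c (hA i j)) => t _; rewrite mxE. Qed.

Lemma MRat_sum N Q D (I : Type) (r : seq I) (F : I -> R -> 'M[C]_N) :
  (forall x, MRat Q D (F x)) -> MRat Q D (fun t => \sum_(x <- r) F x t).
Proof.
move=> h i j; apply: Rat_ext _ (Rat_sum (F := fun x t => F x t i j) (P := predT) r (fun x _ => h x i j)).
by move=> t _; rewrite summxE.
Qed.

Lemma MRat_adj N Q D (A : R -> 'M[C]_N) : MRat Q D A ->
  MRat (map_poly conjc Q) D (fun t => adjmx (A t)).
Proof. by move=> hA i j; apply: Rat_ext _ (Rat_conj (hA j i)) => t _; rewrite !mxE. Qed.

Lemma MRat_embed k n (q : 'I_k -> 'I_n) Q D (U : R -> 'M[C]_(2 ^ k)) : MRat Q D U ->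
  MRat Q D (fun t => embed q (U t)).
Proof.
move=> hU i j.
have [c|c] := boolP [forall l : 'I_n, [exists t : 'I_k, q t == l] || (bitof i l == bitof j l)];
  last by apply: Rat_ext _ (Rat0 Q D) => t _; rewrite mxE (negbTE c).
apply: (@Rat_ext _ _ _ (fun t => mxe (U t) (restr_idx q i) (restr_idx q j))); first by move=> t _; rewrite mxE c.
rewrite /mxe; case: (insub _) => [a|]; last exact: Rat0.
case: (insub _) => [b|]; last exact: Rat0.
exact: hU.
Qed.

End S.

Section S.
Variable R : rcfType.
Local Notation C := R[i].

Lemma RatF_det N (B : R -> 'M[C]_N) : MRat 1 1 B -> RatF 1 N (fun t => \det (B t)).
Proof.
move=> hB.
have := Rat_sum (P := predT) (F := fun (s : {perm 'I_N}) t => (-1) ^+ s * \prod_i B t i (s i)) (index_enum _)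
  (fun s _ => Rat_scal _ (Rat_le (eq_leq (muln1 N)) (Rat_prod (F := fun i t => B t i (s i)) (fun i => hB i (s i))))).
by apply: Rat_ext.
Qed.

Lemma inv_MRat d (H : 'M[C]_d) :
  (forall t : R, 0 <= t <= 1 -> (2 - t)%:C *: 1%:M + t%:C *: H \in unitmx) ->
  exists Pd : {poly C}, (size Pd <= d.+1)%N /\ (forall t : R, 0 <= t <= 1 -> Pd.[t%:C] != 0) /\
    MRat Pd d (fun t => invmx ((2 - t)%:C *: 1%:M + t%:C *: H)).
Proof.
move=> hinv.
pose A := fun t : R => (2 - t)%:C *: 1%:M + t%:C *: H.
have hA : MRat 1 1 A.
  move=> i j; apply: Rat_ext _ (Rat_lin (2 * (1%:M : 'M[C]_d) i j) (H i j - (1%:M : 'M[C]_d) i j)) => t _.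
  rewrite /A !mxE rmorphB /=. rewrite rmorph_nat. ring.
case: (RatF_det hA) => Pd [sPd ePd].
exists Pd; split => //; split.
  by move=> t ht; have := hinv t ht; rewrite unitmxE unitfE ePd // hornerE divr1.
move=> i j.
have hc : RatF 1 d.-1 (fun t => \adj (A t) i j).
  have hr : MRat 1 1 (fun t => row' j (col' i (A t))).
    by move=> a b; apply: Rat_ext _ (hA (lift j a) (lift i b)) => t _; rewrite !mxE.
  by apply: Rat_ext _ (Rat_scal ((-1) ^+ (j + i)) (RatF_det hr)) => t _; rewrite mxE.
case: hc => Pa [sPa ePa]; exists Pa; split.
  by apply: leq_trans sPa _; case: d {H hinv A hA Pd sPd ePd i j Pa ePa} => [|d] //=; rewrite ltnW.
move=> t ht.
rewrite /invmx hinv // mxE ePa // ePd // !hornerE !invr1 !mulr1 mulrC; exact: mulr1.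
Qed.

Lemma gate_MRat d (H G : 'M[C]_d) :
  (forall t : R, 0 <= t <= 1 -> (2 - t)%:C *: 1%:M + t%:C *: H \in unitmx) ->
  exists Qu : {poly C}, (size Qu <= d.+1)%N /\ (forall t : R, 0 <= t <= 1 -> Qu.[t%:C] != 0) /\
    MRat Qu d.+1 (fun t => cayley H t *m G).
Proof.
move=> hinv; case: (inv_MRat hinv) => Pd [sPd [nPd hPd]].
have hX : MRat 1 1 (fun t => t%:C *: 1%:M + (2 - t)%:C *: H).
  move=> i j; apply: Rat_ext _ (Rat_lin (2 * H i j) ((1%:M : 'M[C]_d) i j - H i j)) => t _.
  rewrite !mxE rmorphB /=. rewrite rmorph_nat. ring.
exists Pd; split => //; split => //.
have := MRat_cr G (MRat_mul hX hPd); rewrite mul1r.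
by apply: MRat_ext.
Qed.

Lemma adjmxM N (A B : 'M[C]_N) : adjmx (A *m B) = adjmx B *m adjmx A.
Proof. by rewrite /adjmx map_mxM trmx_mul. Qed.

Lemma adjmxK N (A : 'M[C]_N) : adjmx (adjmx A) = A.
Proof. by apply/matrixP => i j; rewrite !mxE conjcK. Qed.

Lemma adjmxD N (A B : 'M[C]_N) : adjmx (A + B) = adjmx A + adjmx B.
Proof. by apply/matrixP => i j; rewrite !mxE rmorphD. Qed.

Lemma adjmxZ N (c : C) (A : 'M[C]_N) : adjmx (c *: A) = conjc c *: adjmx A.
Proof. by apply/matrixP => i j; rewrite !mxE rmorphM. Qed.

Lemma adjmx_sum N (I : Type) (r : seq I) (F : I -> 'M[C]_N) :
  adjmx (\sum_(x <- r) F x) = \sum_(x <- r) adjmx (F x).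
Proof. by apply/matrixP => i j; rewrite !mxE !summxE rmorph_sum; apply: eq_bigr => x _; rewrite !mxE. Qed.

Lemma conjR (x : R) : conjc (x%:C) = x%:C.
Proof. by rewrite /conjc /= oppr0. Qed.

Definition herm N (A : 'M[C]_N) := adjmx A = A.

Lemma herm_conj N (U rho : 'M[C]_N) : herm rho -> herm (U *m rho *m adjmx U).
Proof. by rewrite /herm => h; rewrite !adjmxM adjmxK h mulmxA. Qed.

Lemma herm_noise n (gamma : R) (ch : noise_chan R n) rho :
  herm rho -> herm (apply_noise gamma ch rho).
Proof.
move=> h; rewrite /herm /apply_noise adjmxD !adjmxZ !conjR adjmx_sum h.
by congr (_ + _ *: _); apply: eq_bigr => K _; apply: herm_conj.
Qed.

Lemma herm_noises n (gamma : R) (s : seq (noise_chan R n)) rho :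
  herm rho -> herm (apply_noises gamma s rho).
Proof.
rewrite /apply_noises; elim: s rho => [|ch s IH] rho h //=.
by apply: IH; apply: herm_noise.
Qed.

Lemma MRat_noise n Q D (gamma : R) (ch : noise_chan R n) (rho : R -> 'M[C]_(2 ^ n)) :
  MRat Q D rho -> MRat Q D (fun t => apply_noise gamma ch (rho t)).
Proof.
move=> h; rewrite /apply_noise.
apply: MRat_add; first exact: MRat_scal.
apply: MRat_scal; apply: MRat_sum => K.
exact: MRat_cr (MRat_cl _ h).
Qed.

Lemma MRat_noises n Q D (gamma : R) (s : seq (noise_chan R n)) (rho : R -> 'M[C]_(2 ^ n)) :
  MRat Q D rho -> MRat Q D (fun t => apply_noises gamma s (rho t)).
Proof.
rewrite /apply_noises; elim: s rho => [|ch s IH] rho h //=.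
exact: (IH (fun t => apply_noise gamma ch (rho t))) (MRat_noise _ _ h).
Qed.

End S.

Section S.
Variable R : rcfType.
Local Notation C := R[i].

Definition good (Q : {poly C}) := forall t : R, 0 <= t <= 1 ->
  Q.[t%:C] != 0 /\ conjc (Q.[t%:C]) = Q.[t%:C].

Lemma conjK (x : C) : conjc (conjc x) = x.
Proof. by case: x => a b; rewrite /conjc /= opprK. Qed.

Lemma conj_neq0 (x : C) : x != 0 -> conjc x != 0.
Proof. by move=> nx; apply/eqP => h; move/eqP: nx; apply; rewrite -[x]conjcK h rmorph0. Qed.

Lemma fold_MRat n m (gamma : R) (Nz' : 'I_m -> seq (noise_chan R n))
  (gU : 'I_m -> R -> 'M[C]_(2 ^ n)) E0
  (hU : forall i, exists Qu : {poly C}, (size Qu <= E0.+1)%N /\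
     (forall t : R, 0 <= t <= 1 -> Qu.[t%:C] != 0) /\ MRat Qu E0 (gU i)) :
  forall (s : seq 'I_m) (rho0 : R -> 'M[C]_(2 ^ n)) Q0 D0,
  MRat Q0 D0 rho0 -> good Q0 -> (size Q0 <= D0.+1)%N ->
  exists Q, good Q /\ (size Q <= (D0 + size s * (2 * E0)).+1)%N /\
   MRat Q (D0 + size s * (2 * E0))
     (fun t => foldl (fun r i => apply_noises gamma (Nz' i) (apply_unitary (gU i t) r)) (rho0 t) s).
Proof.
elim=> [|i s IH] rho0 Q0 D0 h0 g0 s0.
  by exists Q0; rewrite /= mul0n addn0.
case: (hU i) => Qu [sQu [nQu hQu]].
have h1 : MRat (Qu * Q0 * map_poly conjc Qu) (D0 + 2 * E0)
   (fun t => apply_noises gamma (Nz' i) (apply_unitary (gU i t) (rho0 t))).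
  apply: MRat_noises; rewrite /apply_unitary.
  apply: MRat_le (MRat_mul (MRat_mul hQu h0) (MRat_adj hQu)); lia.
have g1 : good (Qu * Q0 * map_poly conjc Qu).
  move=> t ht; rewrite !hornerM horner_conj; case: (g0 t ht) => n0 r0; split.
    by rewrite !mulf_neq0 ?conj_neq0 ?nQu.
  rewrite !rmorphM /= conjK r0; ring.
have s1 : (size (Qu * Q0 * map_poly conjc Qu)%R <= (D0 + 2 * E0).+1)%N.
  apply: leq_trans (size_polyMleq _ _) _; rewrite size_map_poly.
  move: (@size_polyMleq _ Qu Q0) sQu s0; move: (size (Qu * Q0)%R) (size Qu) (size Q0) => a u v; lia.
have [Q [gQ [sQ hQ]]] := IH _ _ _ h1 g1 s1.
exists Q; rewrite /=.
have -> : (D0 + (size s).+1 * (2 * E0) = D0 + 2 * E0 + size s * (2 * E0))%N by lia.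
by split.
Qed.

Lemma herm_fold n m (gamma : R) (Nz' : 'I_m -> seq (noise_chan R n))
  (U : 'I_m -> 'M[C]_(2 ^ n)) (s : seq 'I_m) rho :
  herm rho -> herm (foldl (fun r i => apply_noises gamma (Nz' i) (apply_unitary (U i) r)) rho s).
Proof.
elim: s rho => //= i s IH rho h; apply: IH; apply: herm_noises; exact: herm_conj.
Qed.

Lemma herm_proj0 n : herm (proj0 R n).
Proof. by apply/matrixP => i j; rewrite !mxE andbC rmorph_nat. Qed.

Lemma tr_proj0 n (X : 'M[C]_(2 ^ n)) (z : 'I_(2 ^ n)) : (z : nat) = 0%N ->
  \tr (proj0 R n *m X) = X z z.
Proof.
move=> hz.
have nz : forall l : 'I_(2 ^ n), l != z -> ((l : nat) == 0%N) = false.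
  move=> l; apply: contraNF => /eqP hl; apply/eqP/val_inj; by rewrite /= hl hz.
rewrite /mxtrace (bigD1 z) //= big1 ?addr0.
  rewrite mxE (bigD1 z) //= big1 ?addr0.
    by rewrite mxE hz /= mul1r.
  by move=> l hl; rewrite mxE hz nz // mul0r.
by move=> i hi; rewrite mxE big1 // => l _; rewrite mxE nz // mul0r.
Qed.

Lemma half2 (x : C) : (x + x) / 2%:R = x.
Proof. by field. Qed.

Lemma size_mapRe (P : {poly C}) : (size (map_poly (@complex.Re R) P) <= size P)%N.
Proof. by rewrite /map_poly; apply: size_poly. Qed.

Lemma Re_horner (P : {poly C}) (t : R) :
  ((map_poly (@complex.Re R) P).[t])%:C = (P.[t%:C] + conjc (P.[t%:C])) / 2%:R.
Proof.
rewrite (horner_coef_wide t (size_mapRe P)) -horner_conj.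
rewrite (horner_coef_wide _ (leqnn (size P))).
rewrite (horner_coef_wide _ (eq_leq (size_map_poly _ P))).
rewrite rmorph_sum /= -big_split /= mulr_suml.
apply: eq_bigr => i _.
rewrite coef_map_id0 // rmorphM rmorphXn /= ReJ_add coef_map /=.
ring.
Qed.

End S.

Unset Implicit Arguments. Set Strict Implicit.

Theorem lemma3 (R : rcfType) (Kmax cN : nat) :
  exists c : nat,
  forall (n m : nat) (k : 'I_m -> nat) (q : forall i, 'I_(k i) -> 'I_n)
         (G H : forall i, 'M[R[i]]_(2 ^ k i)) (gamma : R)
         (Nz : 'I_m.+1 -> seq (noise_chan R n)),
    (forall i, k i <= Kmax)%N ->
    (forall i, injective (q i)) ->
    (forall i, unitary (G i)) ->
    (forall i, unitary (H i)) ->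
    (forall i (theta : R), 0 <= theta <= 1 ->
       (2 - theta)%:C *: 1%:M + theta%:C *: H i \in unitmx) ->
    0 <= gamma <= 1 ->
    (forall j ch, List.In ch (Nz j) -> valid_noise Kmax ch) ->
    (\sum_(j < m.+1) size (Nz j) <= cN * m)%N ->
    exists P Q : {poly R},
      (size P <= (c * m).+1)%N /\ (size Q <= (c * m).+1)%N /\
      forall theta : R, 0 <= theta <= 1 ->
        Q.[theta] != 0 /\
        p0 q G H gamma Nz theta = (P.[theta] / Q.[theta])%:C.
Proof.
pose E0 := (2 ^ Kmax).+1.
exists (2 * E0)%N.
move=> n m k q G H gamma Nz hk _ _ _ hinv _ _ _.
pose gU := fun i t => embed (q i) (cayley (H i) t *m G i).
have hU : forall i, exists Qu : {poly R[i]}, (size Qu <= E0.+1)%N /\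
     (forall t : R, 0 <= t <= 1 -> Qu.[t%:C] != 0) /\ MRat Qu E0 (gU i).
  move=> i; case: (gate_MRat (G i) (hinv i)) => Qu [sQu [nQu hQu]].
  have le : ((2 ^ k i).+1 <= E0)%N by rewrite ltnS leq_exp2l.
  exists Qu; split; first by apply: leq_trans sQu _; rewrite ltnW.
  split => //.
  exact: MRat_le le (MRat_embed (q i) hQu).
pose rho0 := fun _ : R => apply_noises gamma (Nz ord0) (proj0 R n).
have h0 : MRat 1 0 rho0 := MRat_noises _ _ (MRat_const _).
have g0 : good (1 : {poly R[i]}).
  by move=> t _; rewrite hornerE rmorph1 oner_neq0.
have [Q [gQ [sQ hQ]]] := fold_MRat gamma (fun i => Nz (lift ord0 i)) hU (enum 'I_m) h0 g0 (eq_leq (size_poly1 _)).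
rewrite size_enum_ord add0n in sQ hQ.
have z0 : (0 < 2 ^ n)%N by rewrite expn_gt0.
pose z := Ordinal z0.
case: (hQ z z) => P [sP eP].
exists (map_poly (@complex.Re R) P), (map_poly (@complex.Re R) Q).
split; first by apply: leq_trans (size_mapRe _) _; rewrite mulnC.
split; first by apply: leq_trans (size_mapRe _) _; rewrite mulnC.
move=> t ht.
set X := noisy_circuit q G H gamma Nz t (proj0 R n).
have hX : herm X by apply: herm_fold; apply: herm_noises; apply: herm_proj0.
have eX : X z z = P.[t%:C] / Q.[t%:C] by rewrite -eP.
have rX : conjc (X z z) = X z z.
  have hX' : adjmx X = X := hX.
  by have := congr1 (fun M : 'M[R[i]]_(2 ^ n) => M z z) hX'; rewrite /= !mxE.
case: (gQ t ht) => nQ rQ.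
have eP' : P.[t%:C] = X z z * Q.[t%:C] by rewrite eX mulfVK.
have rP : conjc (P.[t%:C]) = P.[t%:C] by rewrite eP' rmorphM /= rX rQ.
have eQR := Re_horner Q t; rewrite rQ half2 in eQR.
have ePR := Re_horner P t; rewrite rP half2 in ePR.
have nQR : (map_poly (@complex.Re R) Q).[t] != 0.
  by apply: contra nQ => /eqP h; rewrite -eQR h.
split => //.
rewrite /p0 (tr_proj0 _ (z := z)) // -/X eX -eQR -ePR.
by rewrite fmorph_div.
Qed.
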